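(* Let $K,T\subset\mathbb{R}^n$ be convex bodies. (1) If $q=(q_1,\dots,q_m)$ is a closed strong $(K,T)$-Minkowski billiard trajectory with respect to the $K$-supporting hyperplanes $H_1,\dots,H_m$, then $q$ is a closed weak $(K,T)$-Minkowski billiard trajectory fulfilling the weak Minkowski billiard reflection rule with respect to $H_1,\dots,H_m$. (2) If in addition $T$ is strictly convex, and $q=(q_1,\dots,q_m)$ is a closed weak $(K,T)$-Minkowski billiard trajectory fulfilling the weak Minkowski billiard reflection rule with respect to $K$-supporting hyperplanes $H_1,\dots,H_m$, then $q$ is a closed strong $(K,T)$-Minkowski billiard trajectory with respect to $H_1,\dots,H_m$.
   Context: A convex body in $\mathbb{R}^n$ is a compact convex set containing the origin in its interior. For a convex body $T$, $T^\circ=\{x:\langle x,y\rangle\le 1\ \forall y\in T\}$ is its polar body and $\mu_{T^\circ}(x)=\min\{t\ge 0: x\in tT^\circ\}$ is the Minkowski functional of $T^\circ$ (it equals the support function $h_T(x)=\max_{y\in T}\langle x,y\rangle$). For a convex set $C$ and $z\in\partial C$, $N_C(z)=\{v:\langle v,y-z\rangle\le 0\ \forall y\in C\}$ is the outer normal cone. A closed polygonal curve with vertices $q_1,\dots,q_m$ ($m\ge 2$), written $(q_1,\dots,q_m)$, is always assumed to satisfy $q_j\ne q_{j+1}$ and $q_j\notin[q_{j-1},q_{j+1}]$ for all $j$, indices taken mod $m$. Its $\ell_T$-length is $\ell_T(q)=\sum_{j=1}^m\mu_{T^\circ}(q_{j+1}-q_j)$. Weak trajectories: a closed polygonal curve $q=(q_1,\dots,q_m)$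 with vertices on $\partial K$ is a closed weak $(K,T)$-Minkowski billiard trajectory if for each $j$ there is a supporting hyperplane $H_j$ of $K$ through $q_j$ such that $q_j$ minimizes $\bar q\mapsto \mu_{T^\circ}(\bar q-q_{j-1})+\mu_{T^\circ}(q_{j+1}-\bar q)$ over all $\bar q\in H_j$; one says $q$ fulfills the weak Minkowski billiard reflection rule with respect to $H_1,\dots,H_m$. Strong trajectories: a closed polygonal curve $q=(q_1,\dots,q_m)$ with vertices on $\partial K$ is a closed strong $(K,T)$-Minkowski billiard trajectory if there are $p_1,\dots,p_m\in\partial T$ with $q_{j+1}-q_j\in N_T(p_j)$ and $p_{j+1}-p_j\in -N_K(q_{j+1})$ for all $j$ (indices mod $m$); $p=(p_1,\dots,p_m)$ is called a closed dual billiard trajectory in $T$. It is a strong trajectory with respect to the $K$-supporting hyperplanes $H_1,\dots,H_m$ through $q_1,\dots,q_m$ if there are outer unit normal vectors $n_K(q_j)\in N_K(q_j)$ with $n_K(q_j)$ normal to $H_j$ and numbers $\mu_j\ge 0$ such that $p_{j+1}-p_j=-\mu_{j+1}n_K(q_{j+1})$ for all $j$. *)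

(* Defs.v *)
From HB Require Import structures.
From mathcomp Require Import all_boot all_order all_algebra.
From mathcomp Require Import all_classical all_reals all_analysis.
Set Implicit Arguments. Unset Strict Implicit. Unset Printing Implicit Defensive.
Import Order.TTheory GRing.Theory Num.Theory numFieldNormedType.Exports.
Local Open Scope classical_set_scope.
Local Open Scope ring_scope.

Section Billiards.
Variables (R : realType) (n : nat).
Notation pt := 'rV[R]_n.

Definition dotp (u v : pt) : R := \sum_(i < n) u 0 i * v 0 i.

Definition convex_set (A : set pt) : Prop :=
  forall x y t, A x -> A y -> 0 <= t <= 1 -> A ((1 - t) *: x + t *: y).

Definition convex_body (K : set pt) : Prop :=
  compact K /\ convex_set K /\ interior K 0.

Definition strictly_convex (T : set pt) : Prop :=
  forall x y t, T x -> T y -> x != y -> 0 < t < 1 ->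
    interior T ((1 - t) *: x + t *: y).

Definition bd (A : set pt) (z : pt) : Prop := closure A z /\ ~ interior A z.

Definition polar (T : set pt) : set pt :=
  [set x | forall y, T y -> dotp x y <= 1].

Definition mink (C : set pt) (x : pt) : R :=
  inf [set t : R | 0 <= t /\ exists y, C y /\ x = t *: y].

Definition normal_cone (C : set pt) (z : pt) : set pt :=
  [set v | forall y, C y -> dotp v (y - z) <= 0].

Definition supporting_hyperplane (K : set pt) (H : set pt) (z : pt) : Prop :=
  exists a : pt, a != 0 /\ H = [set x | dotp a (x - z) = 0] /\
    (forall y, K y -> dotp a (y - z) <= 0).

Definition normal_to (v : pt) (H : set pt) (z : pt) : Prop :=
  H = [set x | dotp v (x - z) = 0].

Definition segment (a b : pt) : set pt :=
  [set x | exists t : R, 0 <= t <= 1 /\ x = (1 - t) *: a + t *: b].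

(* closed polygonal curve (q_1,...,q_m), indices mod m via ordS / ord_pred *)
Definition closed_polygon (m : nat) (q : 'I_m -> pt) : Prop :=
  (1 < m)%N /\
  forall j : 'I_m, q j != q (ordS j) /\ ~ segment (q (ord_pred j)) (q (ordS j)) (q j).

Definition weak_traj_wrt (K T : set pt) (m : nat) (q : 'I_m -> pt)
    (H : 'I_m -> set pt) : Prop :=
  forall j : 'I_m,
    bd K (q j) /\ supporting_hyperplane K (H j) (q j) /\
    forall qb, H j qb ->
      mink (polar T) (q j - q (ord_pred j)) + mink (polar T) (q (ordS j) - q j)
      <= mink (polar T) (qb - q (ord_pred j)) + mink (polar T) (q (ordS j) - qb).

Definition strong_traj_dual (K T : set pt) (m : nat) (q p : 'I_m -> pt) : Prop :=
  forall j : 'I_m,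
    bd K (q j) /\ bd T (p j) /\
    normal_cone T (p j) (q (ordS j) - q j) /\
    normal_cone K (q (ordS j)) (- (p (ordS j) - p j)).

Definition strong_traj_wrt (K T : set pt) (m : nat) (q : 'I_m -> pt)
    (H : 'I_m -> set pt) : Prop :=
  (forall j, supporting_hyperplane K (H j) (q j)) /\
  exists (p : 'I_m -> pt) (nK : 'I_m -> pt) (mu : 'I_m -> R),
    strong_traj_dual K T q p /\
    forall j : 'I_m,
      normal_cone K (q j) (nK j) /\ dotp (nK j) (nK j) = 1 /\
      normal_to (nK j) (H j) (q j) /\ 0 <= mu j /\
      p (ordS j) - p j = - (mu (ordS j) *: nK (ordS j)).

End Billiards.

(* Main.v *)
Require Import Defs.
From HB Require Import structures.
From mathcomp Require Import all_boot all_order all_algebra.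
From mathcomp Require Import all_classical all_reals all_analysis.
From mathcomp Require Import ring lra.
Set Implicit Arguments. Unset Strict Implicit. Unset Printing Implicit Defensive.
Import Order.TTheory GRing.Theory Num.Theory numFieldNormedType.Exports.
Local Open Scope classical_set_scope.
Local Open Scope ring_scope.

Section Aux.
Variables (R : realType) (n : nat).
Notation pt := 'rV[R]_n.
Implicit Types (u v w x y z : pt).

Lemma dotpC u v : dotp u v = dotp v u.
Proof. by rewrite /dotp; apply: eq_bigr => i _; rewrite mulrC. Qed.
Lemma dotpDl u v w : dotp (u + v) w = dotp u w + dotp v w.
Proof. by rewrite /dotp -big_split; apply: eq_bigr => i _; rewrite !mxE mulrDl. Qed.
Lemma dotpZl (c : R) u w : dotp (c *: u) w = c * dotp u w.
Proof. by rewrite /dotp mulr_sumr; apply: eq_bigr => i _; rewrite !mxE mulrA. Qed.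
Lemma dotpNl u w : dotp (- u) w = - dotp u w.
Proof. by rewrite -scaleN1r dotpZl mulN1r. Qed.
Lemma dotpBl u v w : dotp (u - v) w = dotp u w - dotp v w.
Proof. by rewrite dotpDl dotpNl. Qed.
Lemma dotpDr u v w : dotp w (u + v) = dotp w u + dotp w v.
Proof. by rewrite dotpC dotpDl !(dotpC w). Qed.
Lemma dotpZr (c : R) u w : dotp w (c *: u) = c * dotp w u.
Proof. by rewrite dotpC dotpZl dotpC. Qed.
Lemma dotpNr u w : dotp w (- u) = - dotp w u.
Proof. by rewrite dotpC dotpNl dotpC. Qed.
Lemma dotpBr u v w : dotp w (u - v) = dotp w u - dotp w v.
Proof. by rewrite dotpDr dotpNr. Qed.
Lemma dotp0l w : dotp 0 w = 0.
Proof. by rewrite -(scale0r 0) dotpZl mul0r. Qed.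
Lemma dotp0r w : dotp w 0 = 0.
Proof. by rewrite dotpC dotp0l. Qed.
Lemma dotp_ge0 x : 0 <= dotp x x.
Proof. by apply: sumr_ge0 => i _; rewrite -expr2 sqr_ge0. Qed.
Lemma dotp_eq0 x : dotp x x = 0 -> x = 0.
Proof.
move=> /eqP; rewrite psumr_eq0; last by move=> i _; rewrite -expr2 sqr_ge0.
move=> /allP H; apply/matrixP => i j; rewrite (ord1 i) mxE.
have := H j (mem_index_enum j); rewrite implyTb mulf_eq0 orbb.
by move/eqP.
Qed.
Lemma dotp_gt0 x : x != 0 -> 0 < dotp x x.
Proof.
move=> x0; rewrite lt_neqAle dotp_ge0 andbT; apply/eqP => /esym /dotp_eq0.
by apply/eqP.
Qed.
Lemma dotp_cont x : continuous (dotp x).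
Proof.
rewrite /dotp.
apply: (@continuous_big R 'I_n +%R 0 xpredT _ pt (index_enum _) (fun i y => x 0 i * y 0 i)).
  exact: (@add_continuous R^o).
move=> i _ y; apply: continuousM; first exact: cst_continuous.
exact: (@coord_continuous R 1 n 0 i).
Qed.

Lemma int_step (A : set pt) z x : interior A z -> exists2 d : R, 0 < d & A (z + d *: x).
Proof.
move=> /nbhs_ballP [e e0 He].
exists (e / (2 * (`|x| + 1))).
  by apply: divr_gt0 => //; apply: mulr_gt0 => //; apply: ltr_wpDl.
apply: He; rewrite -ball_normE /= opprD addrA subrr add0r normrN normrZ.
rewrite ger0_norm; last by apply: divr_ge0; [exact: ltW| apply: mulr_ge0 => //; apply: addr_ge0].
have hx : 0 <= `|x| by [].
rewrite mulrAC ltr_pdivrMr; last by apply: mulr_gt0 => //; apply: ltr_wpDl.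
rewrite ltr_pM2l //; lra.
Qed.


Lemma cb_closed (T : set pt) : convex_body T -> closed T.
Proof. by case=> cT _; apply: compact_closed => //; exact: norm_hausdorff. Qed.

Lemma cb_0 (T : set pt) : convex_body T -> T 0.
Proof. by case=> _ [_ /interior_subset]. Qed.

Definition ismax (T : set pt) x p := T p /\ forall y, T y -> dotp x y <= dotp x p.

Lemma maxim (T : set pt) x : convex_body T -> exists p, ismax T x p.
Proof.
move=> cbT; have T0 := cb_0 cbT; case: cbT => cT _.
have [|||p pT Hp] := @EVT_max_rV R n (dotp x) T.
- by exists 0.
- exact: cT.
- by apply: continuous_subspaceT => y; apply: dotp_cont.
by exists p; split; [exact: set_mem | move=> y /mem_set; exact: Hp].
Qed.

Lemma ortho_zero (T : set pt) x : convex_body T -> (forall y, T y -> dotp x y <= 0) -> x = 0.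
Proof.
case=> _ [_ iT] H; have [d d0 Td] := int_step x iT.
have := H _ Td; rewrite add0r dotpZr => h.
apply: dotp_eq0; apply/eqP; rewrite eq_le dotp_ge0 andbT.
by rewrite -(pmulr_rle0 _ d0).
Qed.

Lemma mink_eq (T : set pt) x p : convex_body T -> ismax T x p ->
  mink (polar T) x = dotp x p.
Proof.
move=> cbT [Tp Hp].
set S := [set t : R | 0 <= t /\ exists y, polar T y /\ x = t *: y].
have lb : lbound S (dotp x p).
  move=> t [t0 [y [Py ->]]]; rewrite dotpZl.
  by rewrite -[X in _ <= X]mulr1 ler_wpM2l // Py.
have mem : S (dotp x p).
  case: (ltrP 0 (dotp x p)) => hp.
    split; first exact: ltW.
    exists ((dotp x p)^-1 *: x); split; last first.
      by rewrite scalerA mulfV ?scale1r // gt_eqF.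
    move=> z Tz; rewrite dotpZl ler_pdivrMl // mulr1; exact: Hp.
  have x0 : x = 0.
    apply: (ortho_zero cbT) => y Ty; exact: le_trans (Hp _ Ty) hp.
  rewrite x0 dotp0l; split => //; exists 0; split; last by rewrite scale0r.
  by move=> z _; rewrite dotp0l.
rewrite /mink -/S; apply: le_anti; apply/andP; split.
  by apply: ge_inf => //; exists (dotp x p).
apply: lb_le_inf => //; by exists (dotp x p).
Qed.

Lemma h_ge (T : set pt) x y : convex_body T -> T y -> dotp x y <= mink (polar T) x.
Proof.
move=> cbT Ty; have [p [Tp Hp]] := maxim x cbT.
rewrite (mink_eq cbT (conj Tp Hp)); exact: Hp.
Qed.

Lemma nc_ismax (T : set pt) x p : T p -> normal_cone T p x -> ismax T x p.
Proof.
move=> Tp H; split => // y Ty; have := H y Ty; rewrite dotpBr; lra.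
Qed.

Lemma ismax_nc (T : set pt) x p : ismax T x p -> normal_cone T p x.
Proof.
move=> [Tp H] y Ty; have := H y Ty; rewrite dotpBr; lra.
Qed.

Lemma uniq_max (T : set pt) x y1 y2 : convex_body T -> strictly_convex T ->
  x != 0 -> ismax T x y1 -> ismax T x y2 -> y1 = y2.
Proof.
move=> cbT scT x0 [T1 H1] [T2 H2]; case: (eqVneq y1 y2) => // ne.
have h2 : (0 < (2^-1 : R)) && ((2^-1 : R) < 1) by apply/andP; split; lra.
have [d d0 Td] := int_step x (scT _ _ _ T1 T2 ne h2).
exfalso; have := H1 _ Td; rewrite !dotpDr !dotpZr.
have := H1 _ T2; have := H2 _ T1; have := mulr_gt0 d0 (dotp_gt0 x0).
lra.
Qed.

Lemma max_not_int (T : set pt) x p : x != 0 -> ismax T x p -> ~ interior T p.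
Proof.
move=> x0 [Tp Hp] ip; have [d d0 Td] := int_step x ip.
have := Hp _ Td; rewrite !dotpDr !dotpZr.
have := mulr_gt0 d0 (dotp_gt0 x0); lra.
Qed.


Lemma gap (T : set pt) x px w (del : R) : convex_body T -> strictly_convex T ->
  x != 0 -> ismax T x px -> 0 < del ->
  exists2 eta : R, 0 < eta &
    forall y, T y -> dotp w px + del <= dotp w y -> dotp x y <= dotp x px - eta.
Proof.
move=> cbT scT x0 [Tp Hp] d0.
set C := T `&` (dotp w @^-1` [set r | dotp w px + del <= r]).
case: (pselect (C !=set0)) => [C0|C0]; last first.
  exists 1 => // y Ty Hy; exfalso; apply: C0; by exists y.
have cC : compact C.
  apply: compact_closedI; first by case: cbT.
  apply: preimage_closed; last exact: closed_ge.
  by move=> y _; apply: dotp_cont.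
have [|c cC' Hc] := @EVT_max_rV R n (dotp x) C C0 cC.
  by apply: continuous_subspaceT => y; apply: dotp_cont.
move/set_mem: cC' => [Tc Cc].
exists (dotp x px - dotp x c); last first.
  move=> y Ty Hy; have := Hc y (mem_set (conj Ty Hy)); lra.
rewrite subr_gt0; case: (ltrP (dotp x c) (dotp x px)) => // hc.
have cmax : ismax T x c by split => // y Ty; exact: le_trans (Hp _ Ty) hc.
have := uniq_max cbT scT x0 cmax (conj Tp Hp) => ec.
move: Cc; rewrite /= ec; lra.
Qed.

Lemma orth (T : set pt) u v pu pv a : convex_body T -> strictly_convex T ->
  u != 0 -> v != 0 -> ismax T u pu -> ismax T v pv ->
  (forall w, dotp a w = 0 -> mink (polar T) u + mink (polar T) v <=
      mink (polar T) (u + w) + mink (polar T) (v - w)) ->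
  forall w, dotp a w = 0 -> 0 <= dotp (pu - pv) w.
Proof.
move=> cbT scT u0 v0 mu mv Hw w aw.
rewrite dotpBl !(dotpC _ w); case: (lerP 0 (dotp w pu - dotp w pv)) => // neg.
exfalso.
set eps := dotp w pv - dotp w pu.
have e0 : 0 < eps / 2 by rewrite /eps; lra.
have [e1 e10 G1] := gap w cbT scT u0 mu e0.
have [e2 e20 G2] := gap (- w) cbT scT v0 mv e0.
have [eta [et0 [et1 et2]]] : exists eta : R, 0 < eta /\ eta <= e1 /\ eta <= e2.
  by case: (lerP e1 e2) => h; [exists e1 | exists e2]; repeat split; lra.
set h := mink (polar T).
have hw0 : 0 <= h w by have := h_ge w cbT (cb_0 cbT); rewrite dotp0r.
have hnw0 : 0 <= h (- w) by have := h_ge (- w) cbT (cb_0 cbT); rewrite dotp0r.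
set M := h w + h (- w).
set s := eta / (M + 1).
have M1 : 0 < M + 1 by rewrite /M; lra.
have s0 : 0 < s by apply: divr_gt0.
have sM : s * h w + s * h (- w) < eta.
  rewrite -mulrDr -/M /s mulrAC ltr_pdivrMr // ltr_pM2l //; lra.
have [y my] := maxim (u + s *: w) cbT.
have [z mz] := maxim (v - s *: w) cbT.
have := Hw (s *: w); rewrite dotpZr aw mulr0 => /(_ erefl).
rewrite /h (mink_eq cbT mu) (mink_eq cbT mv) (mink_eq cbT my) (mink_eq cbT mz).
rewrite dotpDl dotpBl !dotpZl.
case: mu => Tpu Hu; case: mv => Tpv Hv; case: my => Ty _; case: mz => Tz _.
have hy := Hu _ Ty; have hz := Hv _ Tz.
have hwy : s * dotp w y <= s * h w.
  apply: ler_wpM2l; [exact: ltW | exact: (h_ge _ cbT Ty)].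
have hwz : s * - dotp w z <= s * h (- w).
  apply: ler_wpM2l; [exact: ltW | rewrite -dotpNl; exact: (h_ge _ cbT Tz)].
have eN : s * - dotp w z = - (s * dotp w z) by ring.
case: (ltrP (dotp w y) (dotp w z)) => cyz.
  have : s * dotp w y < s * dotp w z by rewrite ltr_pM2l.
  lra.
case: (lerP (dotp w pu + eps / 2) (dotp w y)) => c1.
  have := G1 y Ty c1; lra.
have c2 : dotp (- w) pv + eps / 2 <= dotp (- w) z.
  rewrite !dotpNl; move: c1 cyz; rewrite /eps => c1 cyz; lra.
have := G2 z Tz c2; lra.
Qed.


Lemma span1 a d : a != 0 -> (forall w, dotp a w = 0 -> 0 <= dotp d w) ->
  d = (dotp d a / dotp a a) *: a.
Proof.
move=> a0 H; set c := dotp d a / dotp a a.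
have aa : dotp a a != 0 by rewrite gt_eqF // dotp_gt0.
set w := d - c *: a.
have aw : dotp a w = 0.
  rewrite /w dotpBr dotpZr /c mulfVK // dotpC; lra.
have anw : dotp a (- w) = 0 by rewrite dotpNr aw oppr0.
have h1 := H _ aw; have := H _ anw; rewrite dotpNr => h2.
have dw : dotp d w = 0 by lra.
have ww : dotp w w = 0.
  by rewrite {1}/w dotpBl dotpZl dw aw mulr0 subr0.
by apply/eqP; rewrite -subr_eq0 -/w; apply/eqP; apply: dotp_eq0.
Qed.

Lemma sign (T : set pt) u v pu pv a (c : R) : convex_body T -> strictly_convex T ->
  u != 0 -> v != 0 -> a != 0 -> ismax T u pu -> ismax T v pv ->
  0 <= dotp a u -> dotp a v <= 0 ->
  (forall w, dotp a w = 0 -> mink (polar T) u + mink (polar T) v <=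
      mink (polar T) (u + w) + mink (polar T) (v - w)) ->
  pu - pv = c *: a -> 0 <= c.
Proof.
move=> cbT scT u0 v0 a0 mu mv au av Hw e.
case: (lerP 0 c) => // c0; exfalso.
have hu : c * dotp a u >= 0.
  rewrite -dotpZl -e dotpBl (dotpC pu) (dotpC pv); case: mu => _ Hu.
  have := Hu _ (proj1 mv); lra.
have hv : c * dotp a v <= 0.
  rewrite -dotpZl -e dotpBl (dotpC pu) (dotpC pv); case: mv => _ Hv.
  have := Hv _ (proj1 mu); lra.
have au0 : dotp a u = 0 by apply: le_anti; rewrite au andbT; nra.
have av0 : dotp a v = 0 by apply: le_anti; rewrite av /=; nra.
have := Hw (- u); rewrite dotpNr au0 oppr0 => /(_ erefl).
rewrite subrr opprK.
have [p0 m0] := maxim 0 cbT; rewrite (mink_eq cbT m0) dotp0l add0r.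
have [r mr] := maxim (v + u) cbT.
rewrite (mink_eq cbT mu) (mink_eq cbT mv) (mink_eq cbT mr) dotpDl => hh.
case: (mu) => Tpu Hu; case: (mv) => Tpv Hv; case: (mr) => Tr Hr.
have h1 := Hu _ Tr; have h2 := Hv _ Tr.
have mur : ismax T u r by split => // y Ty; have := Hu _ Ty; lra.
have mvr : ismax T v r by split => // y Ty; have := Hv _ Ty; lra.
have e1 := uniq_max cbT scT u0 mu mur.
have e2 := uniq_max cbT scT v0 mv mvr.
move: e; rewrite e1 e2 subrr => /esym /eqP; rewrite scaler_eq0 (negbTE a0) orbF.
move/eqP => c00; lra.
Qed.

End Aux.

Lemma cb_mem (R : realType) n (T : set 'rV[R]_n) z : convex_body T -> closure T z -> T z.
Proof. by move=> cb; rewrite -((closure_id T).1 (cb_closed cb)). Qed.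

Lemma part1 (R : realType) (n : nat) (K T : set 'rV[R]_n) :
  convex_body K -> convex_body T ->
  (forall (m : nat) (q : 'I_m -> 'rV[R]_n) (H : 'I_m -> set 'rV[R]_n),
     closed_polygon q -> strong_traj_wrt K T q H -> weak_traj_wrt K T q H).
Proof.
move=> cbK cbT m q H _ [Hsupp [p [nK [mu [Hd Hn]]]]] j.
have [bdK [_ [ncj _]]] := Hd j.
split => //; split; first exact: Hsupp.
move=> qb Hqb.
set i := ord_pred j.
have [_ [bdTi [nci _]]] := Hd i; rewrite /i ord_predK in nci.
have Tpi := cb_mem cbT bdTi.1.
have [_ [bdTj _]] := Hd j; have Tpj := cb_mem cbT bdTj.1.
rewrite (mink_eq cbT (nc_ismax Tpi nci)) (mink_eq cbT (nc_ismax Tpj ncj)).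
have g1 := h_ge (qb - q i) cbT Tpi.
have g2 := h_ge (q (ordS j) - qb) cbT Tpj.
have [_ [_ [nt [_ e]]]] := Hn i; rewrite /i ord_predK in e.
have [_ [_ [ntj _]]] := Hn j.
move: Hqb; rewrite ntj /= => hq.
have key : dotp (qb - q j) (p j - p i) = 0.
  by rewrite e dotpNr dotpZr dotpC hq mulr0 oppr0.
move: key g1 g2; rewrite !dotpBl !dotpBr.
lra.
Qed.

Lemma part2 (R : realType) (n : nat) (K T : set 'rV[R]_n) :
  convex_body K -> convex_body T ->
  (strictly_convex T ->
   forall (m : nat) (q : 'I_m -> 'rV[R]_n) (H : 'I_m -> set 'rV[R]_n),
     closed_polygon q -> weak_traj_wrt K T q H -> strong_traj_wrt K T q H).
Proof.
move=> cbK cbT scT m q H [_ Hpoly] Hw.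
pose v j := q (ordS j) - q j.
have v0 : forall j, v j != 0.
  by move=> j; rewrite /v subr_eq0 eq_sym; exact: (Hpoly j).1.
pose p j := proj1_sig (cid (maxim (v j) cbT)).
have mp : forall j, ismax T (v j) (p j) := fun j => proj2_sig (cid (maxim (v j) cbT)).
pose a j := proj1_sig (cid (Hw j).2.1).
have ha : forall j, a j != 0 /\ H j = [set x | dotp (a j) (x - q j) = 0] /\
    (forall y, K y -> dotp (a j) (y - q j) <= 0) := fun j => proj2_sig (cid (Hw j).2.1).
pose c j := dotp (p (ord_pred j) - p j) (a j) / dotp (a j) (a j).
have hc : forall j, p (ord_pred j) - p j = c j *: a j /\ 0 <= c j.
  move=> j; set i := ord_pred j.
  have [a0 [Heq Hs]] := ha j.
  have mu : ismax T (q j - q i) (p i) by have := mp i; rewrite /v /i ord_predK.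
  have u0 : q j - q i != 0 by have := v0 i; rewrite /v /i ord_predK.
  have Hmin : forall w, dotp (a j) w = 0 ->
      mink (polar T) (q j - q i) + mink (polar T) (v j) <=
      mink (polar T) (q j - q i + w) + mink (polar T) (v j - w).
    move=> w aw; have := (Hw j).2.2 (q j + w).
    rewrite Heq /= addrAC subrr add0r => /(_ aw).
    by rewrite /v /i (addrAC (q j)) opprD addrA.
  have e := span1 a0 (orth cbT scT u0 (v0 j) mu (mp j) Hmin).
  split; first exact: e.
  apply: (sign cbT scT u0 (v0 j) a0 mu (mp j) _ _ Hmin e).
    have Ki : K (q i) := cb_mem cbK (Hw i).1.1.
    have := Hs _ Ki; rewrite -opprB dotpNr; lra.
  have KS : K (q (ordS j)) := cb_mem cbK (Hw (ordS j)).1.1.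
  exact: Hs _ KS.
pose s j := Num.sqrt (dotp (a j) (a j)).
have s0 : forall j, 0 < s j by move=> j; rewrite sqrtr_gt0 dotp_gt0 //; exact: (ha j).1.
pose nK j := (s j)^-1 *: a j.
pose mu j := c j * s j.
split; first by move=> j; exact: (Hw j).2.1.
exists p, nK, mu; split.
  move=> j; split; first exact: (Hw j).1.
  split.
    split; first by apply: subset_closure; exact: (mp j).1.
    exact: (max_not_int (v0 j) (mp j)).
  split; first exact: (ismax_nc (mp j)).
  have [e c0] := hc (ordS j); rewrite ordSK in e.
  rewrite opprB e => y Ky; rewrite dotpZl.
  apply: mulr_ge0_le0 => //; exact: (ha (ordS j)).2.2.
move=> j; have [a0 [Heq Hs]] := ha j.
have sj := s0 j.
split.
  move=> y Ky; rewrite dotpZl; apply: mulr_ge0_le0; last exact: Hs.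
  by rewrite invr_ge0 ltW.
split.
  rewrite /nK dotpZl dotpZr mulrA -expr2 exprVn sqr_sqrtr ?dotp_ge0 //.
  by rewrite mulVf // gt_eqF // dotp_gt0.
split.
  rewrite /normal_to Heq; apply: funext => x; apply: propext; rewrite /= dotpZl.
  split; first by move=> ->; rewrite mulr0.
  by move/eqP; rewrite mulf_eq0 invr_eq0 (gt_eqF sj) /= => /eqP.
split; first by apply: mulr_ge0; [exact: (hc j).2 | exact: ltW].
have [e _] := hc (ordS j); rewrite ordSK in e.
rewrite /mu /nK scalerA -mulrA mulfV ?gt_eqF // mulr1 -e opprB //.
Qed.

Theorem theorem1p1 (R : realType) (n : nat) (K T : set 'rV[R]_n) :
  convex_body K -> convex_body T ->
  (forall (m : nat) (q : 'I_m -> 'rV[R]_n) (H : 'I_m -> set 'rV[R]_n),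
     closed_polygon q -> strong_traj_wrt K T q H -> weak_traj_wrt K T q H) /\
  (strictly_convex T ->
   forall (m : nat) (q : 'I_m -> 'rV[R]_n) (H : 'I_m -> set 'rV[R]_n),
     closed_polygon q -> weak_traj_wrt K T q H -> strong_traj_wrt K T q H).
Proof.
move=> cbK cbT; split; [exact: part1 | exact: part2].
Qed.
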